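(* Let $(\kappa_1,\ldots,\kappa_n)\in\mathcal{K}(K,\mathcal{P},\mathcal{Q})$ and $\delta\in(0,1)$. Let $\phi_1,\ldots,\phi_m>0$, $\psi_1,\ldots,\psi_n>0$, and let $\lambda_{\ell,j}\in\mathbb{R}$ be given for $j=1,\ldots,m$ and $\ell\in\mathcal{C}(j)$. Set $\lambda_{\ell,j}:=0$ for $\ell\notin\mathcal{C}(j)$. Define $$\Phi:=\sum_{j=1}^m\phi_jP_j,\qquad \Psi:=\sum_{\ell=1}^n\psi_\ell Q_\ell,\qquad \Lambda:=\sum_{j=1}^m\sum_{\ell\in\mathcal{C}(j)}\lambda_{\ell,j}\,Q_\ell KP_j\in\mathcal{L}(X;Y).$$ Suppose that $$(1-\delta)\psi_\ell\ \ge\ \kappa_\ell\bigl(\lambda_{\ell,1}^2/\phi_1,\ldots,\lambda_{\ell,m}^2/\phi_m\bigr)\qquad(\ell=1,\ldots,n).$$ Then the operator $$\mathcal{M}:=\begin{pmatrix}\Phi & -\Lambda^*\\ -\Lambda & \Psi\end{pmatrix}\in\mathcal{L}(X\times Y;X\times Y)$$ is self-adjoint and positive semidefinite. Moreover, $$\mathcal{M}\ \ge\ \begin{pmatrix}\delta\Phi & 0\\ 0 & 0\end{pmatrix}.$$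
   Context: $X,Y$ are real Hilbert spaces and $K\in\mathcal{L}(X;Y)$ is a bounded linear operator. The operators $P_1,\ldots,P_m\in\mathcal{L}(X;X)$ are orthogonal projections with $\sum_{j=1}^mP_j=I$ and $P_iP_j=0$ for $i\ne j$. Likewise $Q_1,\ldots,Q_n\in\mathcal{L}(Y;Y)$ are orthogonal projections with $\sum_{\ell}Q_\ell=I$ and $Q_kQ_\ell=0$ for $k\ne\ell$. We write $\mathcal{P}=\{P_1,\ldots,P_m\}$ and $\mathcal{Q}=\{Q_1,\ldots,Q_n\}$, and $\mathcal{C}(j):=\{\ell\in\{1,\ldots,n\}: Q_\ell KP_j\neq0\}$. For self-adjoint operators, $T\ge S$ means that $T-S$ is positive semidefinite. Definition: $(\kappa_1,\ldots,\kappa_n)\in\mathcal{K}(K,\mathcal{P},\mathcal{Q})$ means that each $\kappa_\ell:[0,\infty)^m\to[0,\infty)$ is monotone (non-decreasing in each argument) and the following three conditions hold. (i) Estimation: for all real numbers $w_{\ell,j}$ ($\ell=1,\ldots,n$, $j=1,\ldots,m$), $$\sum_{j=1}^m\sum_{\ell,k=1}^n w_{\ell,j}w_{k,j}\,Q_\ell KP_jK^*Q_k\ \le\ \sum_{\ell=1}^n\kappa_\ell(w_{\ell,1}^2,\ldots,w_{\ell,m}^2)\,Q_\ell.$$ (ii) Boundedness: there is $\overline\kappa>0$ with $\kappa_\ell(z_1,\ldots,z_m)\le\overline\kappa\sum_j z_j$. (iii) Non-degeneracy: there are $\underline\kappa>0$ and indices $\ell^*(j)\in\{1,\ldots,n\}$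 with $\underline\kappa z_j\le\kappa_{\ell^*(j)}(z_1,\ldots,z_m)$ for $j=1,\ldots,m$. *)

(* Defs.v *)
From Stdlib Require Import Reals.
Open Scope R_scope.

Record RHilbert := {
  hcar :> Type;
  hzero : hcar;
  hadd : hcar -> hcar -> hcar;
  hopp : hcar -> hcar;
  hscal : R -> hcar -> hcar;
  hinner : hcar -> hcar -> R;
  hadd_assoc : forall x y z, hadd x (hadd y z) = hadd (hadd x y) z;
  hadd_comm : forall x y, hadd x y = hadd y x;
  hadd_0 : forall x, hadd x hzero = x;
  hadd_opp : forall x, hadd x (hopp x) = hzero;
  hscal_assoc : forall a b x, hscal a (hscal b x) = hscal (a * b) x;
  hscal_1 : forall x, hscal 1 x = x;
  hscal_distr_v : forall a x y, hscal a (hadd x y) = hadd (hscal a x) (hscal a y);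
  hscal_distr_s : forall a b x, hscal (a + b) x = hadd (hscal a x) (hscal b x);
  hinner_sym : forall x y, hinner x y = hinner y x;
  hinner_add : forall x y z, hinner (hadd x y) z = hinner x z + hinner y z;
  hinner_scal : forall a x y, hinner (hscal a x) y = a * hinner x y;
  hinner_pos : forall x, 0 <= hinner x x;
  hinner_def : forall x, hinner x x = 0 -> x = hzero;
  hcomplete : forall u : nat -> hcar,
    (forall eps, 0 < eps -> exists N, forall p q, (N <= p)%nat -> (N <= q)%nat ->
        sqrt (hinner (hadd (u p) (hopp (u q))) (hadd (u p) (hopp (u q)))) < eps) ->
    exists l, forall eps, 0 < eps -> exists N, forall p, (N <= p)%nat ->
        sqrt (hinner (hadd (u p) (hopp l)) (hadd (u p) (hopp l))) < eps
}.

Arguments hzero {r}.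
Arguments hadd {r}.
Arguments hopp {r}.
Arguments hscal {r}.
Arguments hinner {r}.

Definition hsub {X : RHilbert} (x y : X) : X := hadd x (hopp y).
Definition hnorm {X : RHilbert} (x : X) : R := sqrt (hinner x x).

Fixpoint vsum {X : RHilbert} (f : nat -> X) (k : nat) : X :=
  match k with O => hzero | S k' => hadd (vsum f k') (f k') end.
Fixpoint rsum (f : nat -> R) (k : nat) : R :=
  match k with O => 0 | S k' => rsum f k' + f k' end.

Definition bounded_linear {X Y : RHilbert} (T : X -> Y) : Prop :=
  (forall a x y, T (hadd (hscal a x) y) = hadd (hscal a (T x)) (T y)) /\
  exists C, forall x, hnorm (T x) <= C * hnorm x.

Definition is_adjoint {X Y : RHilbert} (T : X -> Y) (Ts : Y -> X) : Prop :=
  forall x y, hinner (T x) y = hinner x (Ts y).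

Definition orth_proj {X : RHilbert} (P : X -> X) : Prop :=
  bounded_linear P /\ (forall x, P (P x) = P x) /\
  (forall x y, hinner (P x) y = hinner x (P y)).

Definition proj_family {X : RHilbert} (m : nat) (P : nat -> X -> X) : Prop :=
  (forall j, (j < m)%nat -> orth_proj (P j)) /\
  (forall x, vsum (fun j => P j x) m = x) /\
  (forall i j, (i < m)%nat -> (j < m)%nat -> i <> j -> forall x, P i (P j x) = hzero).

Definition Cset {X Y : RHilbert} (K : X -> Y) (P : nat -> X -> X) (Q : nat -> Y -> Y)
  (j l : nat) : Prop := exists x, Q l (K (P j x)) <> hzero.

Definition nonneg_vec (m : nat) (z : nat -> R) : Prop := forall j, (j < m)%nat -> 0 <= z j.

(** kappa : [0,oo)^m -> [0,oo) monotone, encoded as (nat -> R) -> R depending only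
    on the first m coordinates. *)
Definition kappa_fun (m : nat) (k : (nat -> R) -> R) : Prop :=
  (forall z z', nonneg_vec m z -> (forall j, (j < m)%nat -> z j = z' j) -> k z = k z') /\
  (forall z, nonneg_vec m z -> 0 <= k z) /\
  (forall z z', nonneg_vec m z -> (forall j, (j < m)%nat -> z j <= z' j) -> k z <= k z').

(** (kappa_1..kappa_n) \in K(K, P, Q); indices are 0-based. *)
Definition in_Kset {X Y : RHilbert} (K : X -> Y) (Kstar : Y -> X) (m n : nat)
  (P : nat -> X -> X) (Q : nat -> Y -> Y) (kap : nat -> (nat -> R) -> R) : Prop :=
  (forall l, (l < n)%nat -> kappa_fun m (kap l)) /\
  (forall (w : nat -> nat -> R) (y : Y),
     hinner (vsum (fun j => vsum (fun l => vsum (fun k =>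
               hscal (w l j * w k j) (Q l (K (P j (Kstar (Q k y)))))) n) n) m) y
     <= hinner (vsum (fun l => hscal (kap l (fun j => (w l j)^2)) (Q l y)) n) y) /\
  (exists kb, 0 < kb /\ forall l z, (l < n)%nat -> nonneg_vec m z ->
       kap l z <= kb * rsum z m) /\
  (exists kl (lstar : nat -> nat), 0 < kl /\ forall j, (j < m)%nat ->
       (lstar j < n)%nat /\ forall z, nonneg_vec m z -> kl * z j <= kap (lstar j) z).

Definition pinner {X Y : RHilbert} (u v : X * Y) : R :=
  hinner (fst u) (fst v) + hinner (snd u) (snd v).

(* Main.v *)
Require Import Defs.
From Stdlib Require Import Reals Lra Lia.
From Corelib Require Import ssreflect.
Open Scope R_scope.
Section Gen.
Variable H : RHilbert.
Lemma ip0l (y : H) : hinner hzero y = 0.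
Proof. pose proof (hinner_add H hzero hzero y) as e. rewrite hadd_0 in e. lra. Qed.
Lemma ipoppl (x y : H) : hinner (hopp x) y = - hinner x y.
Proof. pose proof (hinner_add H x (hopp x) y) as e. rewrite hadd_opp ip0l in e. lra. Qed.
Lemma ipsubl (x y z : H) : hinner (hsub x y) z = hinner x z - hinner y z.
Proof. unfold hsub. rewrite hinner_add ipoppl. ring. Qed.
Lemma ipvsuml (f : nat -> H) k y : hinner (vsum f k) y = rsum (fun i => hinner (f i) y) k.
Proof. induction k; simpl. apply ip0l. rewrite hinner_add IHk. reflexivity. Qed.
Lemma ip0r (y : H) : hinner y hzero = 0.
Proof. rewrite hinner_sym. apply ip0l. Qed.
Lemma ipsubr (x y z : H) : hinner z (hsub x y) = hinner z x - hinner z y.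
Proof. rewrite !(hinner_sym H z). apply ipsubl. Qed.
Lemma ipvsumr (f : nat -> H) k y : hinner y (vsum f k) = rsum (fun i => hinner y (f i)) k.
Proof. rewrite hinner_sym ipvsuml. induction k; simpl; auto. rewrite IHk hinner_sym. reflexivity. Qed.
Lemma ipscalr a (x y : H) : hinner y (hscal a x) = a * hinner y x.
Proof. rewrite !(hinner_sym H y). apply hinner_scal. Qed.
Lemma young (a b : H) t : 0 < t -> 2 * hinner a b <= t * hinner a a + hinner b b / t.
Proof.
  intro ht. pose proof (hinner_pos H (hsub (hscal t a) b)) as h.
  rewrite ipsubl !ipsubr !hinner_scal !ipscalr (hinner_sym H b a) in h.
  apply (Rmult_le_reg_l t); auto.
  replace (t * (t * hinner a a + hinner b b / t)) with (t*t*hinner a a + hinner b b) by (field; lra).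
  nra.
Qed.
Lemma proj_sq (P : H -> H) x : orth_proj P -> hinner (P x) (P x) = hinner (P x) x.
Proof. intros [_ [hi hs]]. rewrite <- hs, hi. reflexivity. Qed.
Lemma proj_pos (P : H -> H) x : orth_proj P -> 0 <= hinner (P x) x.
Proof. intro h. rewrite <- proj_sq; auto. apply hinner_pos. Qed.
End Gen.

Lemma rsum_ext f g k : (forall i, (i < k)%nat -> f i = g i) -> rsum f k = rsum g k.
Proof. induction k; simpl; intros h; auto. rewrite IHk ?h; auto. Qed.
Lemma rsum_le f g k : (forall i, (i < k)%nat -> f i <= g i) -> rsum f k <= rsum g k.
Proof. induction k; simpl; intros h. lra. pose proof (IHk ltac:(auto)). pose proof (h k ltac:(lia)). lra. Qed.
Lemma rsum_add f g k : rsum (fun i => f i + g i) k = rsum f k + rsum g k.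
Proof. induction k; simpl. ring. rewrite IHk. ring. Qed.
Lemma rsum_scal c f k : rsum (fun i => c * f i) k = c * rsum f k.
Proof. induction k; simpl. ring. rewrite IHk. ring. Qed.
Lemma rsum0 k : rsum (fun _ => 0) k = 0.
Proof. induction k; simpl; auto. rewrite IHk; lra. Qed.
Lemma rsum_nonneg f k : (forall i, (i < k)%nat -> 0 <= f i) -> 0 <= rsum f k.
Proof. intro h. pose proof (rsum_le (fun _ => 0) f k h). rewrite rsum0 in H. lra. Qed.
Lemma sqrt_aux a b c p : 0 < p -> a / sqrt p * (b / sqrt p) * c = / p * (a * b * c).
Proof.
  intro hp. pose proof (sqrt_lt_R0 p hp).
  replace (/p) with (/(sqrt p * sqrt p)) by (rewrite sqrt_sqrt; lra).
  field. lra.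
Qed.
Lemma sqrt_aux2 a p : 0 < p -> (a / sqrt p)^2 = a^2 / p.
Proof.
  intro hp. pose proof (sqrt_lt_R0 p hp).
  replace (a^2/p) with (a^2/(sqrt p * sqrt p)) by (rewrite sqrt_sqrt; lra).
  field. lra.
Qed.
Theorem mainTheorem1
  (X Y : RHilbert) (K : X -> Y) (Kstar : Y -> X)
  (hK : bounded_linear K) (hKs : is_adjoint K Kstar)
  (m n : nat) (P : nat -> X -> X) (Q : nat -> Y -> Y)
  (hP : proj_family m P) (hQ : proj_family n Q)
  (kap : nat -> (nat -> R) -> R) (hkap : in_Kset K Kstar m n P Q kap)
  (delta : R) (hdelta : 0 < delta < 1)
  (phi psi : nat -> R)
  (hphi : forall j, (j < m)%nat -> 0 < phi j)
  (hpsi : forall l, (l < n)%nat -> 0 < psi l)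
  (lam : nat -> nat -> R)
  (hlam : forall j l, (j < m)%nat -> (l < n)%nat -> ~ Cset K P Q j l -> lam l j = 0)
  (hcond : forall l, (l < n)%nat ->
     (1 - delta) * psi l >= kap l (fun j => (lam l j)^2 / phi j)) :
  let Phi := fun x : X => vsum (fun j => hscal (phi j) (P j x)) m in
  let Psi := fun y : Y => vsum (fun l => hscal (psi l) (Q l y)) n in
  let Lambda := fun x : X =>
    vsum (fun j => vsum (fun l => hscal (lam l j) (Q l (K (P j x)))) n) m in
  forall Lstar : Y -> X, is_adjoint Lambda Lstar ->
  let M := fun u : X * Y =>
    (hsub (Phi (fst u)) (Lstar (snd u)), hsub (Psi (snd u)) (Lambda (fst u))) in
  let D := fun u : X * Y => (hscal delta (Phi (fst u)), (hzero : Y)) in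
  (forall u v, pinner (M u) v = pinner u (M v)) /\
  (forall u, 0 <= pinner (M u) u) /\
  (forall u, 0 <= pinner (hsub (fst (M u)) (fst (D u)), hsub (snd (M u)) (snd (D u))) u).
Proof.
  intros Phi Psi Lambda Lstar hL M D.
  destruct hP as [hPo _]. destruct hQ as [hQo _]. destruct hkap as [hkf [hest _]].
  assert (hPhi_sym : forall x1 x2, hinner (Phi x1) x2 = hinner x1 (Phi x2)).
  { intros x1 x2. unfold Phi. rewrite ipvsuml ipvsumr. apply rsum_ext => j hj.
    rewrite hinner_scal ipscalr. destruct (hPo j hj) as [_ [_ hs]]. rewrite hs. reflexivity. }
  assert (hPsi_sym : forall y1 y2, hinner (Psi y1) y2 = hinner y1 (Psi y2)).
  { intros x1 x2. unfold Psi. rewrite ipvsuml ipvsumr. apply rsum_ext => j hj.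
    rewrite hinner_scal ipscalr. destruct (hQo j hj) as [_ [_ hs]]. rewrite hs. reflexivity. }
  assert (hPhi_pos : forall x, 0 <= hinner (Phi x) x).
  { intros x. unfold Phi. rewrite ipvsuml. apply rsum_nonneg => j hj.
    rewrite hinner_scal. pose proof (hphi j hj). pose proof (proj_pos _ (P j) x (hPo j hj)). nra. }
  assert (G1 : forall j l z y, (j < m)%nat -> (l < n)%nat ->
     hinner (Q l (K (P j z))) y = hinner (P j z) (P j (Kstar (Q l y)))).
  { intros j l z y hj hl. destruct (hQo l hl) as [_ [_ hqs]]. destruct (hPo j hj) as [_ [hpi hps]].
    rewrite hqs hKs -hps hpi. reflexivity. }
  assert (key : forall x y, 2 * hinner (Lambda x) y <= (1 - delta) * hinner (Phi x) x + hinner (Psi y) y).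
  { intros x y.
    set (c := fun j l => P j (Kstar (Q l y))).
    set (b := fun j => vsum (fun l => hscal (lam l j) (c j l)) n).
    set (w := fun l j => lam l j / sqrt (phi j)).
    set (S := fun j => rsum (fun l => rsum (fun k => w l j * w k j * hinner (c j l) (c j k)) n) n).
    assert (S1 : hinner (Lambda x) y = rsum (fun j => hinner (P j x) (b j)) m).
    { unfold Lambda. rewrite ipvsuml. apply rsum_ext => j hj. rewrite ipvsuml /b ipvsumr.
      apply rsum_ext => l hl. rewrite hinner_scal ipscalr G1 //. }
    assert (S2 : hinner (Phi x) x = rsum (fun j => phi j * hinner (P j x) (P j x)) m).
    { unfold Phi. rewrite ipvsuml. apply rsum_ext => j hj. rewrite hinner_scal proj_sq //. auto. }
    assert (S3 : forall j, hinner (b j) (b j) =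
        rsum (fun l => rsum (fun k => lam l j * lam k j * hinner (c j l) (c j k)) n) n).
    { intro j. rewrite {1}/b ipvsuml. apply rsum_ext => l _. rewrite hinner_scal /b ipvsumr -rsum_scal.
      apply rsum_ext => k _. rewrite ipscalr. ring. }
    assert (S4 : hinner (vsum (fun j => vsum (fun l => vsum (fun k =>
               hscal (w l j * w k j) (Q l (K (P j (Kstar (Q k y)))))) n) n) m) y
             = rsum S m).
    { rewrite ipvsuml. apply rsum_ext => j hj. rewrite ipvsuml /S. apply rsum_ext => l hl.
      rewrite ipvsuml. apply rsum_ext => k hk. rewrite hinner_scal G1 // hinner_sym. reflexivity. }
    assert (S5 : rsum S m <= (1 - delta) * hinner (Psi y) y).
    { rewrite -S4. eapply Rle_trans. apply hest. rewrite ipvsuml. unfold Psi. rewrite ipvsuml -rsum_scal.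
      apply rsum_le => l hl. rewrite !hinner_scal.
      assert (E : kap l (fun j => w l j ^ 2) = kap l (fun j => lam l j ^ 2 / phi j)).
      { destruct (hkf l hl) as [hk1 _]. apply hk1.
        - intros j _. apply pow2_ge_0.
        - intros j hj. unfold w. apply sqrt_aux2. auto. }
      rewrite E. pose proof (hcond l hl). pose proof (proj_pos _ (Q l) y (hQo l hl)).
      assert (0 <= kap l (fun j => lam l j ^ 2 / phi j)).
      { destruct (hkf l hl) as [_ [hk2 _]]. apply hk2. intros j hj.
        pose proof (hphi j hj). apply Rle_mult_inv_pos. apply pow2_ge_0. auto. }
      nra. }
    assert (S6 : forall j, (j < m)%nat -> hinner (b j) (b j) / ((1 - delta) * phi j) = / (1 - delta) * S j).
    { intros j hj. pose proof (hphi j hj). rewrite S3.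
      transitivity (/ (1 - delta) * (/ phi j * rsum (fun l => rsum (fun k => lam l j * lam k j * hinner (c j l) (c j k)) n) n)).
      field. lra. f_equal. rewrite -rsum_scal. apply rsum_ext => l _. rewrite -rsum_scal. apply rsum_ext => k _.
      unfold w. rewrite sqrt_aux //. }
    rewrite S1 S2.
    apply Rle_trans with (rsum (fun j => (1 - delta) * (phi j * hinner (P j x) (P j x)) + / (1 - delta) * S j) m).
    - rewrite -rsum_scal. apply rsum_le => j hj. pose proof (hphi j hj).
      rewrite -S6 //. replace ((1 - delta) * (phi j * hinner (P j x) (P j x))) with
        (((1 - delta) * phi j) * hinner (P j x) (P j x)) by ring.
      apply young. nra.
    - rewrite rsum_add rsum_scal rsum_scal.
      assert (/ (1 - delta) * rsum S m <= hinner (Psi y) y).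
      { replace (hinner (Psi y) y) with (/ (1 - delta) * ((1 - delta) * hinner (Psi y) y)) by (field; lra).
        apply Rmult_le_compat_l. left. apply Rinv_0_lt_compat. lra. auto. }
      lra. }
  assert (third : forall u, 0 <= pinner (hsub (fst (M u)) (fst (D u)), hsub (snd (M u)) (snd (D u))) u).
  { intros [x y]. unfold pinner, M, D. simpl. rewrite !ipsubl ip0l hinner_scal.
    rewrite (hinner_sym _ (Lstar y) x) -hL. pose proof (key x y). lra. }
  split; [|split; auto].
  - intros [x1 y1] [x2 y2]. unfold pinner, M. simpl. rewrite !ipsubl !ipsubr hPhi_sym hPsi_sym.
    rewrite (hinner_sym _ (Lstar y1) x2) -!hL.
    rewrite (hinner_sym _ (Lambda x1) y2) (hinner_sym _ (Lambda x2) y1). lra.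
  - intros u. pose proof (third u). destruct u as [x y]. unfold pinner, M, D in *. simpl in *.
    rewrite !ipsubl ip0l hinner_scal in H. pose proof (hPhi_pos x). rewrite !ipsubl. nra.
Qed.
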